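(* Let $T:\mathcal{M}_d\to\mathcal{M}_d$ be a doubly stochastic quantum channel. The following are equivalent: (1) $T$ is primitive; (2) there exists $n\in\mathbb{N}$ such that $(T^* )^nT^n$ is primitive.
   Context: A quantum channel is a completely positive trace-preserving map; doubly stochastic means $T(\mathbb{1})=T^*(\mathbb{1})=\mathbb{1}$, with $T^*$ the Hilbert–Schmidt adjoint. A doubly stochastic channel $S$ is primitive if $\lim_{k\to\infty}S^k(\rho)=\mathbb{1}_d/d$ for every density matrix $\rho$. *)

(* Defs.v *)
From HB Require Import structures.
From mathcomp Require Import all_boot all_order all_algebra.
From mathcomp Require Import reals.
From mathcomp.real_closed Require Import complex.
Set Implicit Arguments. Unset Strict Implicit. Unset Printing Implicit Defensive.
Import Order.TTheory GRing.Theory Num.Theory.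
Local Open Scope ring_scope.

Section QChannels.
Variable R : realType.
Local Notation C := R[i].

Definition adjmx (m n : nat) (A : 'M[C]_(m, n)) : 'M[C]_(n, m) :=
  (map_mx Num.conj A)^T.

Definition psd (n : nat) (A : 'M[C]_n) : Prop :=
  forall v : 'cV[C]_n, 0 <= (adjmx v *m A *m v) 0 0.

(* positivity of a block operator X = (X i j) in M_k (M_d) = M_k (x) M_d *)
Definition psd_block (k d : nat) (X : 'I_k -> 'I_k -> 'M[C]_d) : Prop :=
  forall v : 'I_k -> 'cV[C]_d,
    0 <= \sum_(i < k) \sum_(j < k) (adjmx (v i) *m X i j *m v j) 0 0.

(* complete positivity: id_k (x) T is positive for every k *)
Definition completely_positive (d : nat) (T : 'M[C]_d -> 'M[C]_d) : Prop :=
  forall (k : nat) (X : 'I_k -> 'I_k -> 'M[C]_d),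
    psd_block X -> psd_block (fun i j => T (X i j)).

Definition trace_preserving (d : nat) (T : 'M[C]_d -> 'M[C]_d) : Prop :=
  forall X : 'M[C]_d, \tr (T X) = \tr X.

Definition quantum_channel (d : nat) (T : {linear 'M[C]_d -> 'M[C]_d}) : Prop :=
  completely_positive T /\ trace_preserving T.

(* Hilbert-Schmidt adjoint: tr (A^dagger T(B)) = tr ((T^* A)^dagger B);
   (T^* A)_{ij} = tr (T(E_ij)^dagger A). *)
Definition hs_adjoint (d : nat) (T : 'M[C]_d -> 'M[C]_d) : 'M[C]_d -> 'M[C]_d :=
  fun A => \matrix_(i, j) \tr (adjmx (T (delta_mx i j)) *m A).

Definition doubly_stochastic (d : nat) (T : {linear 'M[C]_d -> 'M[C]_d}) : Prop :=
  quantum_channel T /\ T 1%:M = 1%:M /\ hs_adjoint T 1%:M = 1%:M.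

Definition density (d : nat) (rho : 'M[C]_d) : Prop := psd rho /\ \tr rho = 1.

(* entrywise convergence of a sequence of matrices (equivalent to norm convergence) *)
Definition mx_cvg (d : nat) (u : nat -> 'M[C]_d) (L : 'M[C]_d) : Prop :=
  forall e : C, 0 < e -> exists N : nat, forall k : nat, (N <= k)%N ->
    forall i j, `|u k i j - L i j| < e.

Definition primitive (d : nat) (S : 'M[C]_d -> 'M[C]_d) : Prop :=
  forall rho : 'M[C]_d, density rho ->
    mx_cvg (fun k => iter k S rho) ((d%:R)^-1 *: 1%:M).

End QChannels.

(* Main.v *)
Require Import Defs.
From HB Require Import structures.
From mathcomp Require Import all_boot all_order all_algebra.
From mathcomp Require Import reals.
From mathcomp.real_closed Require Import complex.
From mathcomp Require Import ring lra.
Set Implicit Arguments. Unset Strict Implicit. Unset Printing Implicit Defensive.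
Import Order.TTheory GRing.Theory Num.Theory.
Local Open Scope ring_scope.

Section Main.
Variable R : realType.
Local Notation C := R[i].
Variable d : nat.
Local Notation M := 'M[C]_d.

Definition hsf (A B : M) : C := \sum_i \sum_j A i j * Num.conj (B i j).

Lemma tr_adj (A B : M) : \tr (adjmx A *m B) = hsf B A.
Proof.
rewrite /mxtrace /hsf exchange_big /=; apply: eq_bigr => j _.
rewrite mxE; apply: eq_bigr => i _; by rewrite !mxE mulrC.
Qed.

Lemma hsf_linl (B : M) : linear (hsf ^~ B).
Proof.
move=> a A A'; rewrite /hsf scaler_sumr -big_split; apply: eq_bigr => i _.
rewrite scaler_sumr -big_split; apply: eq_bigr => j _.
by rewrite !mxE mulrDl -mulrA.
Qed.

Lemma hsf_linr (A : M) : GRing.linear_for (Num.conj \; *%R) (hsf A).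
Proof.
move=> a B B'; rewrite /hsf /= mulr_sumr -big_split; apply: eq_bigr => i _.
rewrite mulr_sumr -big_split; apply: eq_bigr => j _.
by rewrite !mxE rmorphD rmorphM /= mulrDr mulrCA.
Qed.

HB.instance Definition _ := bilinear_isBilinear.Build C M M C *%R (Num.conj \; *%R) hsf
  (hsf_linl, hsf_linr).

Lemma hsf_herm (A B : M) : hsf A B = (-1) ^+ false * Num.conj (hsf B A).
Proof.
rewrite expr0 mul1r /hsf rmorph_sum; apply: eq_bigr => i _.
rewrite rmorph_sum; apply: eq_bigr => j _.
by rewrite rmorphM /= conjCK mulrC.
Qed.

HB.instance Definition _ := isHermitianSesquilinear.Build C M false Num.conj hsf hsf_herm.

Lemma hsf_self (A : M) : hsf A A = \sum_i \sum_j `|A i j| ^+ 2.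
Proof. by apply: eq_bigr => i _; apply: eq_bigr => j _; rewrite normCK. Qed.

Lemma hsf_ge0 (A : M) : 0 <= hsf A A.
Proof. by rewrite hsf_self; apply: sumr_ge0 => i _; apply: sumr_ge0 => j _; apply: exprn_ge0. Qed.

Lemma hsf_eq0 (A : M) : hsf A A = 0 -> A = 0.
Proof.
rewrite hsf_self => /psumr_eq0P H; apply/matrixP => i j; rewrite mxE.
have /psumr_eq0P H2 := H (fun i _ => sumr_ge0 _ (fun j _ => exprn_ge0 2 (normr_ge0 (A i j)))) i isT.
have := H2 (fun j _ => exprn_ge0 2 (normr_ge0 (A i j))) j isT.
by move/eqP; rewrite expf_eq0 /= normr_eq0 => /eqP.
Qed.

Lemma hsf_pos (A : M) : A != 0 -> 0 < hsf A A.
Proof.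
move=> nz; rewrite lt_def hsf_ge0 andbT; apply/eqP => /hsf_eq0 H.
by rewrite H eqxx in nz.
Qed.

HB.instance Definition _ := isDotProduct.Build C M hsf hsf_pos.

Lemma CS (A B : M) : `|hsf A B| ^+ 2 <= hsf A A * hsf B B.
Proof. exact: (CauchySchwarz (hsf : {dot M for Num.conj}) A B). Qed.


Definition lin (f : M -> M) := forall (a : C) (x y : M), f (a *: x + y) = a *: f x + f y.

Section Lin.
Variable f : M -> M.
Hypothesis hf : lin f.
Lemma lin0 : f 0 = 0.
Proof. by have := hf (-1) 0 0; rewrite scaler0 addr0 scaleN1r addNr. Qed.
Lemma linD x y : f (x + y) = f x + f y.
Proof. by have := hf 1 x y; rewrite !scale1r. Qed.
Lemma linZ a x : f (a *: x) = a *: f x.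
Proof. by have := hf a x 0; rewrite !addr0 lin0 addr0. Qed.
Lemma linN x : f (- x) = - f x.
Proof. by rewrite -scaleN1r linZ scaleN1r. Qed.
Lemma linB x y : f (x - y) = f x - f y.
Proof. by rewrite linD linN. Qed.
Lemma lin_sum (I : finType) (F : I -> M) : f (\sum_i F i) = \sum_i f (F i).
Proof.
elim/big_rec2: _ => [|i y1 y2 _ <-]; first exact: lin0.
by rewrite linD.
Qed.
End Lin.

Lemma lin_iter f k : lin f -> lin (iter k f).
Proof. move=> hf; elim: k => [//|k IH] a x y /=; by rewrite IH hf. Qed.

Lemma lin_comp f g : lin f -> lin g -> lin (fun x => f (g x)).
Proof. by move=> hf hg a x y; rewrite hg hf. Qed.

Lemma lin_linear (T : {linear M -> M}) : lin T.
Proof. by move=> a x y; rewrite linearP. Qed.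

Lemma hsfC (A B : M) : hsf A B = Num.conj (hsf B A).
Proof. by rewrite hsf_herm expr0 mul1r. Qed.

Lemma hsf_sumr (A : M) (I : finType) (F : I -> M) :
  hsf A (\sum_i F i) = \sum_i hsf A (F i).
Proof.
elim/big_rec2: _ => [|i y1 y2 _ <-].
  by rewrite /hsf; apply: big1 => i _; apply: big1 => j _; rewrite mxE rmorph0 mulr0.
by rewrite /hsf -big_split; apply: eq_bigr => a _; rewrite -big_split; apply: eq_bigr => b _;
  rewrite mxE rmorphD mulrDr.
Qed.

Lemma hsfZr (A B : M) a : hsf A (a *: B) = Num.conj a * hsf A B.
Proof.
rewrite /hsf mulr_sumr; apply: eq_bigr => i _; rewrite mulr_sumr; apply: eq_bigr => j _.
by rewrite mxE rmorphM /= mulrCA.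
Qed.

Lemma msd (A : M) : A = \sum_i \sum_j A i j *: delta_mx i j.
Proof.
apply/matrixP => a b; rewrite summxE (bigD1 a) //= summxE (bigD1 b) //= !mxE !eqxx mulr1.
rewrite big1 ?addr0 => [|j /negbTE nj]; last by rewrite !mxE eq_sym nj andbF mulr0.
rewrite big1 ?addr0 // => i /negbTE ni; rewrite summxE big1 // => j _.
by rewrite !mxE eq_sym ni mulr0.
Qed.

Lemma hsf_adj f (A B : M) : lin f -> hsf (hs_adjoint f B) A = hsf B (f A).
Proof.
move=> hf; rewrite {2}(msd A) (lin_sum hf).
rewrite (hsf_sumr B (fun i => f (\sum_j A i j *: delta_mx i j))).
rewrite {1}/hsf; apply: eq_bigr => i _.
rewrite (lin_sum hf) (hsf_sumr B (fun j => f (A i j *: delta_mx i j))); apply: eq_bigr => j _.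
by rewrite (linZ hf) hsfZr !mxE tr_adj mulrC.
Qed.

Lemma lin_adj f : lin (hs_adjoint f).
Proof.
move=> a x y; apply/matrixP => i j; rewrite !mxE !tr_adj.
exact: (hsf_linl (f (delta_mx i j)) a x y).
Qed.

Lemma hsf_adj_iter f k (A B : M) : lin f ->
  hsf (iter k (hs_adjoint f) B) A = hsf B (iter k f A).
Proof.
move=> hf; elim: k A => [//|k IH] A.
by rewrite iterS hsf_adj ?IH -?iterSr //; apply: lin_iter; apply: lin_adj.
Qed.


Lemma adjmxM m n p (A : 'M[C]_(m, n)) (B : 'M[C]_(n, p)) :
  adjmx (A *m B) = adjmx B *m adjmx A.
Proof. by rewrite /adjmx map_mxM trmx_mul. Qed.
Lemma adjmxD m n (A B : 'M[C]_(m, n)) : adjmx (A + B) = adjmx A + adjmx B.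
Proof. by rewrite /adjmx map_mxD linearD. Qed.
Lemma adjmxN m n (A : 'M[C]_(m, n)) : adjmx (- A) = - adjmx A.
Proof. by rewrite /adjmx map_mxN linearN. Qed.
Lemma adjmxZ m n a (A : 'M[C]_(m, n)) : adjmx (a *: A) = Num.conj a *: adjmx A.
Proof. by rewrite /adjmx map_mxZ linearZ. Qed.
Lemma adjmxK m n (A : 'M[C]_(m, n)) : adjmx (adjmx A) = A.
Proof. by apply/matrixP => i j; rewrite !mxE conjCK. Qed.
Lemma adjmx1 : adjmx (1%:M : M) = 1%:M.
Proof. by rewrite /adjmx map_mx1 trmx1. Qed.

Definition qf (X : M) (a b : 'cV[C]_d) : C := (adjmx a *m X *m b) 0 0.

Lemma sum1 (F : 'I_d -> C) p : \sum_k ((k == p)%:R * F k) = F p.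
Proof.
rewrite (bigD1 p) //= eqxx mul1r big1 ?addr0 // => k /negbTE ->.
by rewrite mul0r.
Qed.

Lemma qf_delta X al be p q :
  qf X (al *: delta_mx p 0) (be *: delta_mx q 0) = Num.conj al * be * X p q.
Proof.
rewrite /qf !mxE.
under eq_bigr => l _ do rewrite !mxE.
under eq_bigr => l _ do under eq_bigr => k _ do rewrite !mxE eqxx andbT rmorphM /= conjC_nat.
rewrite (bigD1 q) //= [X in _ + X]big1 => [|l nl]; last by rewrite (negbTE nl) mulr0 mulr0.
rewrite addr0 !eqxx mulr1.
rewrite (bigD1 p) //= [X in _ + X]big1 => [|k nk]; last by rewrite (negbTE nk) mulr0 mul0r.
by rewrite addr0 eqxx mulr1 mulrAC.
Qed.

Lemma qf_delta1 X p q : qf X (delta_mx p 0) (delta_mx q 0) = X p q.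
Proof. by have := qf_delta X 1 1 p q; rewrite !scale1r rmorph1 !mul1r. Qed.

Definition blk (P Q Rr U : M) : 'I_2 -> 'I_2 -> M := fun i j =>
  if (i == 0 :> nat) then (if (j == 0 :> nat) then P else Q)
  else (if (j == 0 :> nat) then Rr else U).

Lemma blk_psd P Q Rr U : psd_block (blk P Q Rr U) ->
  forall a b, 0 <= qf P a a + qf Q a b + qf Rr b a + qf U b b.
Proof.
move=> H a b; have := H (fun i : 'I_2 => if (i == 0 :> nat) then a else b).
by rewrite !big_ord_recl !big_ord0 /= !addr0 addrA.
Qed.

Lemma real_ge0 (x : C) : 0 <= x -> Num.conj x = x.
Proof. by move=> /ger0_real /CrealP. Qed.

Lemma polar (P Q Rr U : M) : (forall a b, 0 <= qf P a a + qf Q a b + qf Rr b a + qf U b b) ->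
  Rr = adjmx Q.
Proof.
move=> H; apply/matrixP => i j.
pose F (l : C) := qf P (l *: delta_mx j 0) (l *: delta_mx j 0) + qf Q (l *: delta_mx j 0) (1 *: delta_mx i 0)
   + qf Rr (1 *: delta_mx i 0) (l *: delta_mx j 0) + qf U (1 *: delta_mx i 0) (1 *: delta_mx i 0).
have HF l : Num.conj (F l) = F l by apply: real_ge0; apply: H.
have E l : F l - F (- l) = 2%:R * (Num.conj l * Q j i + l * Rr i j).
  by rewrite /F !qf_delta !rmorphN /= rmorph1 !mulr1 !mul1r mulrNN; ring.
have E1 := E 1; have Ei := E 'i.
rewrite rmorph1 !mul1r in E1.
rewrite conjCi in Ei.
have two0 : (2%:R : C) != 0 by rewrite pnatr_eq0.
have realc (z : C) : Num.conj (2%:R * z) = 2%:R * z -> Num.conj z = z.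
  by rewrite rmorphM /= conjC_nat => H2; apply: (mulfI two0).
have r1 : Num.conj (Q j i + Rr i j) = Q j i + Rr i j.
  by apply: realc; rewrite -E1 rmorphB /= !HF.
have r2 : Num.conj ('i * (Rr i j - Q j i)) = 'i * (Rr i j - Q j i).
  apply: realc.
  have -> : 2%:R * ('i * (Rr i j - Q j i)) = F 'i - F (- 'i) by rewrite Ei; ring.
  by rewrite rmorphB /= !HF.
rewrite !mxE.
move: r2; rewrite rmorphM rmorphB /= conjCi => r2.
have r3 : Num.conj (Rr i j) - Num.conj (Q j i) = Q j i - Rr i j.
  apply: (@mulfI _ (- 'i)); first by rewrite oppr_eq0 neq0Ci.
  by rewrite r2 mulNr -mulrN opprB.
move: r1; rewrite rmorphD /= => r1.
have : 2%:R * Rr i j = 2%:R * Num.conj (Q j i).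
  have -> : 2%:R * Rr i j = (Q j i + Rr i j) - (Q j i - Rr i j) by ring.
  rewrite -r1 -r3; ring.
by move=> H2; apply: (mulfI two0).
Qed.



Lemma vec_ge0 (w : 'cV[C]_d) : 0 <= (adjmx w *m w) 0 0.
Proof.
rewrite mxE; apply: sumr_ge0 => k _; rewrite !mxE mulrC -normCK.
exact: exprn_ge0.
Qed.

Lemma e00D (A B : 'M[C]_1) : (A + B) 0 0 = A 0 0 + B 0 0.
Proof. by rewrite mxE. Qed.
Lemma e00N (A : 'M[C]_1) : (- A) 0 0 = - A 0 0.
Proof. by rewrite mxE. Qed.

Lemma blk_pos (X : M) : psd_block (blk 1%:M X (adjmx X) (adjmx X *m X)).
Proof.
move=> v; rewrite !big_ord_recl !big_ord0 /= !addr0 /blk /=.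
set a := v ord0; set b := v (lift ord0 ord0).
have := vec_ge0 (a + X *m b).
rewrite adjmxD adjmxM mulmxDl !mulmxDr !e00D !mulmxA mulmx1.
by rewrite !addrA.
Qed.

Lemma contr (T : {linear M -> M}) : doubly_stochastic T -> forall X, hsf (T X) (T X) <= hsf X X.
Proof.
case=> [[cp tp] [T1 Ts1]] X.
have H := cp 2 _ (blk_pos X).
have H' : psd_block (blk 1%:M (T X) (T (adjmx X)) (T (adjmx X *m X))).
  move=> v; have := H v; congr (0 <= _); apply: eq_bigr => i _; apply: eq_bigr => j _.
  by rewrite /blk; do 2 case: ifP => _ //; rewrite T1.
have Hq := blk_psd H'; have Ep := polar Hq; rewrite Ep in Hq.
set Q := T X in Hq *; set U := T (adjmx X *m X) in Hq *.
have Hj j : (adjmx Q *m Q) j j <= U j j.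
  have := Hq (- (Q *m delta_mx j 0)) (delta_mx j 0).
  rewrite /qf adjmxN adjmxM mulmx1 !mulNmx !mulmxN opprK !mulmxA !e00N.
  rewrite -!(mulmxA (adjmx (delta_mx j 0))).
  have qq (W : M) : (adjmx (delta_mx j (0:'I_1)) *m (W *m delta_mx j (0:'I_1))) (0:'I_1) (0:'I_1) = W j j.
    by rewrite mulmxA; exact: qf_delta1.
  rewrite !qq.
  by rewrite subrr sub0r addrC subr_ge0.
rewrite -!tr_adj -(tp (adjmx X *m X)) /mxtrace; apply: ler_sum => j _; exact: Hj.
Qed.


Local Notation Nm A := (hsf A A).

Lemma Nm_real (A : M) : Num.conj (Nm A) = Nm A.
Proof. exact: real_ge0 (hsf_ge0 A). Qed.

Lemma contr_iter (T : {linear M -> M}) : doubly_stochastic T ->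
  forall k X, Nm (iter k T X) <= Nm X.
Proof.
move=> ds; elim=> [//|k IH] X /=.
exact: le_trans (contr ds _) (IH X).
Qed.

Lemma contr_adj (T : {linear M -> M}) : doubly_stochastic T ->
  forall A, Nm (hs_adjoint T A) <= Nm A.
Proof.
move=> ds A; set Y := hs_adjoint T A.
have e : Nm Y = hsf A (T Y) by rewrite {1}/Y hsf_adj //; exact: lin_linear.
have h : Nm Y * Nm Y <= Nm A * Nm Y.
  have := CS A (T Y); rewrite -e ger0_norm ?hsf_ge0 // expr2 => h.
  apply: le_trans h _; apply: ler_wpM2l; first exact: hsf_ge0.
  exact: contr.
have [z|nz] := eqVneq (Nm Y) 0; first by rewrite z hsf_ge0.
have p : 0 < Nm Y by rewrite lt_def nz hsf_ge0.
by rewrite -(ler_pM2r p).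
Qed.

Lemma contr_adj_iter (T : {linear M -> M}) : doubly_stochastic T ->
  forall k A, Nm (iter k (hs_adjoint T) A) <= Nm A.
Proof.
move=> ds; elim=> [//|k IH] X /=.
exact: le_trans (contr_adj ds _) (IH X).
Qed.

Lemma tr_hsf (Y : M) : \tr Y = hsf Y 1%:M.
Proof. by rewrite -tr_adj adjmx1 mul1mx. Qed.

Lemma tp_adj (T : {linear M -> M}) : doubly_stochastic T ->
  forall A, \tr (hs_adjoint T A) = \tr A.
Proof.
case=> _ [T1 _] A; rewrite !tr_hsf hsf_adj ?T1 //; exact: lin_linear.
Qed.

Lemma tp_iter (f : M -> M) : (forall A, \tr (f A) = \tr A) -> forall k A, \tr (iter k f A) = \tr A.
Proof. by move=> h; elim=> [//|k IH] A /=; rewrite h IH. Qed.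

Definition sig : M := (d%:R)^-1 *: 1%:M.

Lemma fix_sig (f : M -> M) : lin f -> f 1%:M = 1%:M -> f sig = sig.
Proof. by move=> hf h; rewrite /sig (linZ hf) h. Qed.

Lemma fix_iter (f : M -> M) X : f X = X -> forall k, iter k f X = X.
Proof. by move=> h; elim=> [//|k /= ->]. Qed.


Definition ev (P : nat -> Prop) := exists N, forall k, (N <= k)%N -> P k.

Lemma ev_and P Q : ev P -> ev Q -> ev (fun k => P k /\ Q k).
Proof.
move=> [N1 h1] [N2 h2]; exists (maxn N1 N2) => k hk; split.
  by apply: h1; apply: leq_trans hk; apply: leq_maxl.
by apply: h2; apply: leq_trans hk; apply: leq_maxr.
Qed.

Lemma ev_impl (P Q : nat -> Prop) : ev P -> (forall k, P k -> Q k) -> ev Q.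
Proof. by move=> [N h] hPQ; exists N => k hk; apply: hPQ; apply: h. Qed.

Lemma ev_fin (I : finType) (P : I -> nat -> Prop) :
  (forall i, ev (P i)) -> ev (fun k => forall i, P i k).
Proof.
move=> h.
suff : forall s : seq I, ev (fun k => forall i, i \in s -> P i k).
  by move=> /(_ (enum I)) [N e]; exists N => k hk i; apply: e => //; rewrite mem_enum.
elim=> [|a s IH]; first by exists 0%N.
have [N e] := ev_and (h a) IH; exists N => k hk i; have [ha hs] := e k hk.
by rewrite in_cons => /orP[/eqP->//|]; exact: hs.
Qed.

Lemma two_gt0 : (0 : C) < 2%:R. Proof. by rewrite ltr0n. Qed.

Lemma half_gt0 (e : C) : 0 < e -> 0 < e / 2%:R.
Proof. by move=> h; rewrite divr_gt0 // two_gt0. Qed.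

Lemma cvgD (u v : nat -> M) L L' : mx_cvg u L -> mx_cvg v L' ->
  mx_cvg (fun k => u k + v k) (L + L').
Proof.
move=> hu hv e ep.
have [N1 h1] := hu _ (half_gt0 ep); have [N2 h2] := hv _ (half_gt0 ep).
exists (maxn N1 N2) => k hk i j.
have k1 : (N1 <= k)%N by apply: leq_trans hk; apply: leq_maxl.
have k2 : (N2 <= k)%N by apply: leq_trans hk; apply: leq_maxr.
rewrite !mxE (_ : _ - _ = (u k i j - L i j) + (v k i j - L' i j)); last by ring.
apply: le_lt_trans (ler_normD _ _) _.
rewrite (splitr e); exact: ltrD (h1 _ k1 i j) (h2 _ k2 i j).
Qed.

Lemma cvgZ (u : nat -> M) L a : mx_cvg u L -> mx_cvg (fun k => a *: u k) (a *: L).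
Proof.
move=> hu e ep.
have [->|anz] := eqVneq a 0.
  by exists 0%N => k _ i j; rewrite !scale0r !mxE subrr normr0.
have ap : 0 < `|a| by rewrite normr_gt0.
have [N h] := hu _ (divr_gt0 ep ap).
exists N => k hk i j; rewrite !mxE -mulrBr normrM.
by rewrite mulrC -ltr_pdivlMr //; apply: h.
Qed.

Lemma cvg_ext (u v : nat -> M) L L' : (forall k, u k = v k) -> L = L' ->
  mx_cvg u L -> mx_cvg v L'.
Proof. by move=> huv <- hu e ep; have [N h] := hu e ep; exists N => k hk i j; rewrite -huv; apply: h. Qed.


Definition Pm (w : 'cV[C]_d) : M := w *m adjmx w.

Lemma one_ge0 (y : 'M[C]_1) : 0 <= (y *m adjmx y) 0 0.
Proof.
rewrite mxE; apply: sumr_ge0 => k _; rewrite !mxE -normCK; exact: exprn_ge0.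
Qed.

Lemma psdZ (A : M) c : 0 <= c -> psd A -> psd (c *: A).
Proof.
move=> hc hA v; rewrite -scalemxAr -scalemxAl mxE; exact: mulr_ge0.
Qed.

Lemma Pm_psd (w : 'cV[C]_d) : psd (Pm w).
Proof.
move=> v; rewrite /Pm !mulmxA -(mulmxA (adjmx v *m w)).
have -> : adjmx w *m v = adjmx (adjmx v *m w) by rewrite adjmxM adjmxK.
exact: one_ge0.
Qed.

Lemma tr_Pm (w : 'cV[C]_d) : \tr (Pm w) = (adjmx w *m w) 0 0.
Proof. by rewrite /Pm mxtrace_mulC /mxtrace big_ord1. Qed.

Lemma qf_ge0_id (w : 'cV[C]_d) : 0 <= (adjmx w *m w) 0 0.
Proof. exact: vec_ge0. Qed.

Lemma dens_Pm (w : 'cV[C]_d) t : (adjmx w *m w) 0 0 = t -> t != 0 -> density (t^-1 *: Pm w).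
Proof.
move=> ht tnz; split.
  apply: psdZ; last exact: Pm_psd.
  by rewrite invr_ge0 -ht vec_ge0.
by rewrite mxtraceZ tr_Pm ht mulVf.
Qed.

Lemma dens_sig : (0 < d)%N -> density sig.
Proof.
move=> dp; split.
  apply: psdZ; first by rewrite invr_ge0 ler0n.
  by move=> v; rewrite mulmx1 vec_ge0.
by rewrite mxtraceZ mxtrace1 mulVf // pnatr_eq0 -lt0n.
Qed.

Definition ev_ (a : 'I_d) : 'cV[C]_d := delta_mx a 0.

Lemma qfDl X x1 x2 y : qf X (x1 + x2) y = qf X x1 y + qf X x2 y.
Proof. by rewrite /qf adjmxD !mulmxDl e00D. Qed.
Lemma qfDr X x y1 y2 : qf X x (y1 + y2) = qf X x y1 + qf X x y2.
Proof. by rewrite /qf mulmxDr e00D. Qed.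

Lemma norm_w a b c : a != b -> Num.conj c * c = 1 ->
  (adjmx (ev_ a + c *: ev_ b) *m (ev_ a + c *: ev_ b)) 0 0 = 2%:R.
Proof.
move=> nab hc.
have -> : forall w, (adjmx w *m w) 0 0 = qf 1%:M w w by move=> w; rewrite /qf mulmx1.
rewrite /ev_ -(scale1r (delta_mx a 0)) !qfDl !qfDr !qf_delta !mxE eqxx (negbTE nab) eq_sym (negbTE nab).
rewrite rmorph1 !mulr1 !mulr0 addr0 add0r hc. by rewrite eqxx mul1r.
Qed.

Lemma Pm_entry (w : 'cV[C]_d) x y : Pm w x y = w x 0 * Num.conj (w y 0).
Proof. by rewrite /Pm mxE big_ord1 !mxE. Qed.


Lemma eD (A B : M) x y : (A + B) x y = A x y + B x y. Proof. by rewrite mxE. Qed.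
Lemma eB (A B : M) x y : (A - B) x y = A x y - B x y. Proof. by rewrite !mxE. Qed.
Lemma eZ (A : M) c x y : (c *: A) x y = c * A x y. Proof. by rewrite mxE. Qed.
Lemma eN (A : M) x y : (- A) x y = - A x y. Proof. by rewrite mxE. Qed.
Lemma sig_entry x y : sig x y = d%:R^-1 * (x == y)%:R. Proof. by rewrite !mxE. Qed.
Lemma delta_entry (a b x y : 'I_d) : (delta_mx a b : M) x y = (x == a)%:R * (y == b)%:R.
Proof. by rewrite mxE -natrM mulnb. Qed.
Lemma w_entry a b c x : (ev_ a + c *: ev_ b) x 0 = (x == a)%:R + c * (x == b)%:R.
Proof. by rewrite !mxE !andbT. Qed.

Lemma Eab_decomp a b : a != b ->
  delta_mx a b = (2%:R^-1 *: Pm (ev_ a + 1 *: ev_ b) - sig)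
     + 'i *: (2%:R^-1 *: Pm (ev_ a + 'i *: ev_ b) - sig)
     - ((1 + 'i) / 2%:R) *: ((delta_mx a a - sig) + (delta_mx b b - sig)).
Proof.
move=> nab.
have e1 x y : Pm (ev_ a + 1 *: ev_ b) x y = ((x == a)%:R + 1 * (x == b)%:R) * Num.conj ((y == a)%:R + 1 * (y == b)%:R).
  by rewrite Pm_entry !w_entry.
have e2 x y : Pm (ev_ a + 'i *: ev_ b) x y = ((x == a)%:R + 'i * (x == b)%:R) * Num.conj ((y == a)%:R + 'i * (y == b)%:R).
  by rewrite Pm_entry !w_entry.
have eab := delta_entry a b; have eaa := delta_entry a a; have ebb := delta_entry b b.
have es := sig_entry.
move: (Pm (ev_ a + 1 *: ev_ b)) (Pm (ev_ a + 'i *: ev_ b)) (delta_mx a b : M) (delta_mx a a : M) (delta_mx b b : M) sig e1 e2 eab eaa ebb es.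
move=> P1 P2 Eab Eaa Ebb S e1 e2 eab eaa ebb es.
apply/matrixP => x y; rewrite !mxE e1 e2 eab eaa ebb es.
rewrite !rmorphD !rmorphM /= !conjC_nat conjCi rmorph1.
move: ('i : C) (sqrCi C) => j hj.
set A1 : C := (x == a)%:R; set B1 : C := (x == b)%:R.
set A2 : C := (y == a)%:R; set B2 : C := (y == b)%:R.
apply/eqP; rewrite eq_sym -subr_eq0; apply/eqP.
transitivity ((j ^+ 2 + 1) * ((B1 * A2 - A1 * B2 - j * B1 * B2) / 2%:R)).
  set s := _ * (x == y)%:R; by field.
by rewrite hj addNr mul0r.
Qed.

End Main.

Section UD.
Variable R : realType.
Local Notation C := R[i].
Variable d : nat.
Local Notation M := 'M[C]_d.
Local Notation Nm A := (hsf A A).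
Local Notation sig := (sig R d).
Variable f : nat -> M -> M.
Hypothesis hf : forall k, lin (f k).
Hypothesis hprim : forall rho, density rho -> mx_cvg (fun k => f k rho) sig.
Hypothesis dp : (0 < d)%N.

Definition good (Z : M) := mx_cvg (fun k => f k Z) 0.

Lemma goodD Z1 Z2 : good Z1 -> good Z2 -> good (Z1 + Z2).
Proof.
move=> h1 h2; apply: cvg_ext (cvgD h1 h2) => [k|]; last by rewrite addr0.
by rewrite (linD (hf k)).
Qed.

Lemma goodZ a Z : good Z -> good (a *: Z).
Proof.
move=> h; apply: cvg_ext (cvgZ a h) => [k|]; last by rewrite scaler0.
by rewrite (linZ (hf k)).
Qed.

Lemma goodB Z1 Z2 : good Z1 -> good Z2 -> good (Z1 - Z2).
Proof. by move=> h1 h2; rewrite -scaleN1r; apply: goodD h1 (goodZ _ h2). Qed.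

Lemma good_dd r1 r2 : density r1 -> density r2 -> good (r1 - r2).
Proof.
move=> d1 d2.
have h := cvgD (hprim d1) (cvgZ (-1) (hprim d2)).
apply: cvg_ext h => [k|]; last by rewrite scaleN1r subrr.
by rewrite (linB (hf k)) scaleN1r.
Qed.

Lemma dens_delta b : density (delta_mx b b : M).
Proof.
have h : (adjmx (ev_ R b) *m ev_ R b) 0 0 = 1 :> C.
  by have := qf_delta1 (1%:M : M) b b; rewrite /qf mulmx1 [X in _ = X -> _]mxE eqxx => ->.
have := dens_Pm h (oner_neq0 _); rewrite invr1 scale1r.
suff -> : Pm (ev_ R b) = delta_mx b b by [].
apply/matrixP => x y; rewrite Pm_entry !mxE !andbT rmorph_nat.
by rewrite -natrM mulnb.
Qed.

Lemma goodE a b : good (delta_mx a b - (a == b)%:R *: sig).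
Proof.
have [<-|nab] := eqVneq a b.
  by rewrite scale1r; apply: good_dd (dens_delta a) (dens_sig R dp).
rewrite scale0r subr0 (Eab_decomp R nab).
have n1 := @norm_w R d a b 1 nab ltac:(by rewrite rmorph1 mulr1).
have n2 := @norm_w R d a b 'i nab ltac:(by rewrite conjCi mulNr -expr2 sqrCi opprK).
have t2 : (2%:R : C) != 0 by rewrite pnatr_eq0.
apply: goodB; first apply: goodD.
- exact: good_dd (dens_Pm n1 t2) (dens_sig R dp).
- by apply: goodZ; apply: good_dd (dens_Pm n2 t2) (dens_sig R dp).
- by apply: goodZ; apply: goodD; apply: good_dd (dens_delta _) (dens_sig R dp).
Qed.


Definition G (a b : 'I_d) : M := delta_mx a b - (a == b)%:R *: sig.

Lemma trless_decomp (Z : M) : \tr Z = 0 -> Z = \sum_a \sum_b Z a b *: G a b.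
Proof.
move=> trZ.
have h0 : \sum_a \sum_b Z a b *: ((a == b)%:R *: sig) = 0.
  transitivity (\sum_a (Z a a *: sig)).
    apply: eq_bigr => a _.
    under eq_bigr => b _ do rewrite scalerA.
    rewrite -scaler_suml; congr (_ *: _).
    under eq_bigr => b _ do rewrite mulrC eq_sym.
    exact: sum1.
  have -> : \sum_a Z a a *: sig = \tr Z *: sig by rewrite /mxtrace scaler_suml.
  by rewrite trZ scale0r.
rewrite /G.
under eq_bigr => a _ do under eq_bigr => b _ do rewrite scalerBr.
under eq_bigr => a _ do rewrite sumrB.
rewrite sumrB h0 subr0; exact: msd.
Qed.

Lemma UD : exists K, forall k, (K <= k)%N -> forall Z : M, \tr Z = 0 ->
  Nm (f k Z) <= 4%:R^-1 * Nm Z.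
Proof.
have dnz : (d%:R : C) != 0 by rewrite pnatr_eq0 -lt0n.
set eps : C := (2%:R * d%:R ^+ 2)^-1.
have epos : 0 < eps by rewrite invr_gt0 mulr_gt0 ?ltr0n // exprn_gt0 // ltr0n.
have H : ev (fun k => forall a b i j, `|f k (G a b) i j| < eps).
  apply: ev_fin => a; apply: ev_fin => b.
  have [N hN] := goodE a b epos; exists N => k hk i j.
  by have := hN k hk i j; rewrite mxE subr0.
have [K hK] := H; exists K => k hk Z trZ.
have hk' := hK k hk.
set S := \sum_a \sum_b `|Z a b|.
have S0 : 0 <= S by apply: sumr_ge0 => a _; apply: sumr_ge0 => b _.
have ent i j : `|f k Z i j| <= eps * S.
  rewrite (trless_decomp trZ) (lin_sum (hf k)).
  rewrite summxE; apply: le_trans (ler_norm_sum _ _ _) _.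
  rewrite /S mulr_sumr; apply: ler_sum => a _.
  rewrite (lin_sum (hf k)) summxE; apply: le_trans (ler_norm_sum _ _ _) _.
  rewrite mulr_sumr; apply: ler_sum => b _.
  rewrite (linZ (hf k)) mxE normrM mulrC; apply: ler_wpM2r => //.
  exact: ltW.
have hS : S ^+ 2 <= (d%:R ^+ 2) * Nm Z.
  pose A : M := \matrix_(a, b) `|Z a b|.
  pose B : M := const_mx 1.
  have := CS A B.
  have -> : hsf A B = S.
    by apply: eq_bigr => a _; apply: eq_bigr => b _; rewrite !mxE rmorph1 mulr1.
  have -> : hsf A A = Nm Z.
    rewrite !hsf_self; apply: eq_bigr => a _; apply: eq_bigr => b _.
    by rewrite mxE normr_id.
  have -> : hsf B B = d%:R ^+ 2.
    rewrite /hsf; under eq_bigr => a _ do under eq_bigr => b _ do rewrite !mxE rmorph1 mulr1.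
    by rewrite sumr_const sumr_const card_ord expr2 mulr_natr.
  by rewrite ger0_norm // => h; rewrite mulrC.
rewrite hsf_self.
apply: le_trans (_ : \sum_(i < d) \sum_(j < d) (eps * S) ^+ 2 <= _).
  apply: ler_sum => i _; apply: ler_sum => j _.
  rewrite !expr2; apply: ler_pM => //; exact: ent.
rewrite sumr_const sumr_const card_ord -mulrnA -[(eps * S) ^+ 2 *+ _]mulr_natr natrM.
have -> : (eps * S) ^+ 2 * (d%:R * d%:R) = (eps ^+ 2 * d%:R ^+ 2) * S ^+ 2 by ring.
apply: le_trans (_ : (eps ^+ 2 * d%:R ^+ 2) * (d%:R ^+ 2 * Nm Z) <= _).
  apply: ler_wpM2l => //; apply: mulr_ge0; apply: exprn_ge0; [exact: ltW | exact: ler0n].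
have -> : (eps ^+ 2 * d%:R ^+ 2) * (d%:R ^+ 2 * Nm Z) = 4%:R^-1 * Nm Z.
  by rewrite /eps; field.
by [].
Qed.

End UD.

Section Fin.
Variable R : realType.
Local Notation C := R[i].
Variable d : nat.
Local Notation M := 'M[C]_d.
Local Notation Nm A := (hsf A A).
Local Notation sig := (sig R d).

Lemma powlt_inv (x y : C) n : (0 < n)%N -> 0 <= x -> 0 <= y -> x ^+ n < y ^+ n -> x < y.
Proof.
move=> hn hx hy; rewrite (ltr_pXn2r hn) //.
Qed.

Lemma entry_le (A : M) a b : `|A a b| ^+ 2 <= Nm A.
Proof.
rewrite hsf_self (bigD1 a) //= (bigD1 b) //= -addrA lerDl.
apply: addr_ge0; first by apply: sumr_ge0 => j _; apply: exprn_ge0.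
by apply: sumr_ge0 => i _; apply: sumr_ge0 => j _; apply: exprn_ge0.
Qed.

Lemma archC (x : C) : 0 <= x -> exists n : nat, x < n%:R.
Proof.
move=> hx; have xr : x \is Num.real := ger0_real hx.
rewrite -(RRe_real xr) in hx *; rewrite ler0c in hx.
exists (Num.Def.archi_bound (complex.Re x)).
by rewrite -(rmorph_nat (real_complex R)) ltcR archi_boundP.
Qed.

Lemma powle (x y : C) n : 0 <= x -> x <= y -> x ^+ n <= y ^+ n.
Proof.
move=> hx hxy; elim: n => [|n IH]; first by rewrite !expr0.
by rewrite !exprS; apply: ler_pM => //; apply: exprn_ge0.
Qed.

Lemma DEC (g : nat -> M -> M) (Z : M) (P : nat) : (0 < P)%N ->
  (forall j, ev (fun m => Nm (g m Z) ^+ P <= (4%:R^-1) ^+ j * Nm Z ^+ P)) ->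
  forall e : C, 0 < e -> ev (fun m => forall a b, `|g m Z a b| < e).
Proof.
move=> hP h e ep.
have e2P : 0 < e ^+ (2 * P) by apply: exprn_gt0.
have NZ0 : 0 <= Nm Z ^+ P by apply: exprn_ge0; apply: hsf_ge0.
have [j hj] := archC (divr_ge0 NZ0 (ltW e2P)).
have [N hN] := h j; exists N => m hm a b.
apply: (@powlt_inv _ _ (2 * P)) => //; first by rewrite muln_gt0.
  exact: ltW.
rewrite exprM.
apply: le_lt_trans (_ : _ <= Nm (g m Z) ^+ P) _.
  by apply: powle; [apply: exprn_ge0 | apply: entry_le].
apply: le_lt_trans (hN m hm) _.
have hjQ : (j%:R : C) <= 4%:R ^+ j by rewrite -natrX ler_nat ltnW // ltn_expl.
have h1 : Nm Z ^+ P < 4%:R ^+ j * e ^+ (2 * P).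
  by rewrite -ltr_pdivrMr //; apply: lt_le_trans hj hjQ.
have q0 : 0 < (4%:R^-1 : C) ^+ j by apply: exprn_gt0; rewrite invr_gt0 ltr0n.
rewrite -(ltr_pM2l q0) in h1; apply: lt_le_trans h1 _.
by rewrite mulrA -exprMn mulVf ?pnatr_eq0 // expr1n mul1r.
Qed.

Lemma FIN (g : nat -> M -> M) : (0 < d)%N -> (forall k, lin (g k)) -> (forall k, g k sig = sig) ->
  (forall Z : M, \tr Z = 0 -> forall e : C, 0 < e -> ev (fun m => forall a b, `|g m Z a b| < e)) ->
  forall rho, density rho -> mx_cvg (fun k => g k rho) sig.
Proof.
move=> dp hg hs hZ rho [_ tr1] e ep.
have trZ : \tr (rho - sig) = 0 by rewrite linearB /= tr1 (proj2 (dens_sig R dp)) subrr.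
have [N hN] := hZ _ trZ e ep; exists N => k hk i j.
have -> : g k rho = g k (rho - sig) + sig by rewrite (linB (hg k)) hs subrK.
by rewrite mxE addrK; apply: hN.
Qed.

End Fin.

Section Dir.
Variable R : realType.
Local Notation C := R[i].
Variable d : nat.
Local Notation M := 'M[C]_d.
Local Notation Nm A := (hsf A A).
Local Notation sig := (sig R d).
Variable T : {linear M -> M}.
Hypothesis ds : doubly_stochastic T.
Local Notation Ta := (hs_adjoint T).

Lemma linT : lin T. Proof. exact: lin_linear. Qed.
Lemma linTa : lin Ta. Proof. exact: lin_adj. Qed.
Lemma Tsig : T sig = sig. Proof. by apply: fix_sig linT _; case: ds => _ []. Qed.
Lemma Tasig : Ta sig = sig. Proof. by apply: fix_sig linTa _; case: ds => _ []. Qed.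
Lemma tpT X : \tr (T X) = \tr X. Proof. by case: ds => [[_ tp] _]; apply: tp. Qed.

Lemma d0_prim (S : M -> M) : d = 0%N -> primitive S.
Proof.
move=> d0 rho _ e ep; exists 0%N => k _ i; exfalso.
have h : forall n (i : 'I_n), n = 0%N -> False by move=> n [m lt] e0; rewrite e0 in lt.
exact: h _ i d0.
Qed.

Definition SS n (X : M) : M := iter n Ta (iter n T X).

Lemma linS n : lin (SS n).
Proof. by apply: lin_comp; apply: lin_iter; [exact: linTa | exact: linT]. Qed.
Lemma Ssig n : SS n sig = sig.
Proof. by rewrite /SS !fix_iter // ?Tsig ?Tasig. Qed.
Lemma trS n X : \tr (SS n X) = \tr X.
Proof. by rewrite /SS (tp_iter (tp_adj ds)) (tp_iter tpT). Qed.
Lemma contrS n X : Nm (SS n X) <= Nm X.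
Proof. exact: le_trans (contr_adj_iter ds _ _) (contr_iter ds _ _). Qed.

Lemma geo_ev (g : nat -> M -> M) (Z : M) P :
  (forall a b, Nm (g (a + b)%N Z) ^+ P <= Nm (g b Z) ^+ P) ->
  forall (c : nat -> nat),
  (forall j, Nm (g (c j) Z) ^+ P <= (4%:R^-1) ^+ j * Nm Z ^+ P) ->
  forall j, ev (fun m => Nm (g m Z) ^+ P <= (4%:R^-1) ^+ j * Nm Z ^+ P).
Proof.
move=> mono c hc j; exists (c j) => m hm.
rewrite -(subnK hm); exact: le_trans (mono _ _) (hc j).
Qed.

Lemma dir1 : primitive T -> exists n, primitive (SS n).
Proof.
move=> pT; have [d0|dp] := posnP d; first by exists 0%N; apply: d0_prim.
have [K hK] := UD (f := fun k => iter k T) (fun k => lin_iter k linT) pT dp.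
exists K.
have hS Z : \tr Z = 0 -> Nm (SS K Z) <= 4%:R^-1 * Nm Z.
  by move=> trZ; apply: le_trans (contr_adj_iter ds _ _) (hK K (leqnn K) Z trZ).
have geo j Z : \tr Z = 0 -> Nm (iter j (SS K) Z) <= (4%:R^-1) ^+ j * Nm Z.
  elim: j Z => [|j IH] Z trZ; first by rewrite expr0 mul1r.
  rewrite iterSr exprSr -mulrA; apply: le_trans (IH _ _) _; first by rewrite trS.
  apply: ler_wpM2l; first by apply: exprn_ge0; rewrite invr_ge0 ler0n.
  exact: hS.
apply: FIN dp (fun k => lin_iter k (linS K)) (fun k => fix_iter (Ssig K) k) _ => Z trZ.
apply: (@DEC _ _ (fun m => iter m (SS K)) Z 1%N) => // j.
apply: (@geo_ev (fun m => iter m (SS K)) Z 1%N _ (fun j => j) _ j) => [a b|j'].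
  rewrite !expr1 iterD; elim: a => [//|a IH] /=; exact: le_trans (contrS _ _) IH.
by rewrite !expr1; apply: geo.
Qed.

Lemma S_selfadj n A B : hsf (SS n A) B = hsf A (SS n B).
Proof.
rewrite /SS (hsf_adj_iter _ _ _ linT).
by rewrite [RHS]hsfC (hsf_adj_iter _ _ _ linT) -hsfC.
Qed.

Lemma Sk_selfadj n k A B : hsf (iter k (SS n) A) B = hsf A (iter k (SS n) B).
Proof.
elim: k A B => [//|k IH] A B.
by rewrite iterS S_selfadj IH -iterSr.
Qed.

Lemma chain n (Z : M) p :
  Nm (iter n T Z) ^+ (2 ^ p.+1) * Nm Z <= Nm Z ^+ (2 ^ p.+1) * Nm (iter (2 ^ p) (SS n) Z).
Proof.
set x := Nm (iter n T Z); set z := Nm Z.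
have z0 : 0 <= z by apply: hsf_ge0.
have x0 : 0 <= x by apply: hsf_ge0.
have y0 q : 0 <= Nm (iter q (SS n) Z) by apply: hsf_ge0.
have hx : x ^+ 2 <= z * Nm (SS n Z).
  have ex : x = hsf (SS n Z) Z by rewrite /SS (hsf_adj_iter _ _ _ linT).
  by have := CS (SS n Z) Z; rewrite -ex ger0_norm // mulrC => h; exact: h.
have hy q : Nm (iter (2 ^ q) (SS n) Z) ^+ 2 <= z * Nm (iter (2 ^ q.+1) (SS n) Z).
  have ey : Nm (iter (2 ^ q) (SS n) Z) = hsf Z (iter (2 ^ q.+1) (SS n) Z).
    by rewrite Sk_selfadj -iterD expnS mul2n addnn.
  by have := CS Z (iter (2 ^ q.+1) (SS n) Z); rewrite -ey ger0_norm // => h; exact: h.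
elim: p => [|p IH].
  rewrite (_ : (2 ^ 1)%N = 2%N) //.
  apply: le_trans (ler_wpM2r z0 hx) _.
  by rewrite mulrC mulrA -expr2.
have [zz|zp] := eqVneq z 0.
  by rewrite zz mulr0; apply: mulr_ge0 => //; apply: exprn_ge0.
have zpos : 0 < z by rewrite lt_def zp z0.
rewrite -(ler_pM2r zpos).
have sq := powle 2 (mulr_ge0 (exprn_ge0 _ x0) z0) IH.
rewrite !exprMn -!exprM -!expnSr in sq.
apply: le_trans (_ : x ^+ (2 ^ p.+2) * z ^+ 2 <= _).
  by rewrite -mulrA -expr2.
apply: le_trans sq _.
rewrite -mulrA; apply: ler_wpM2l; first exact: exprn_ge0.
by rewrite mulrC; apply: hy.
Qed.

Lemma dir2 : (exists n, primitive (SS n)) -> primitive T.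
Proof.
move=> [n pS]; have [d0|dp] := posnP d; first exact: d0_prim.
have [K hK] := UD (f := fun k => iter k (SS n)) (fun k => lin_iter k (linS n)) pS dp.
pose P := (2 ^ K.+1)%N.
have Ppos : (0 < P)%N by rewrite expn_gt0.
have hK2 : (K <= 2 ^ K)%N by apply: ltnW; apply: ltn_expl.
have key Z : \tr Z = 0 -> Nm (iter n T Z) ^+ P <= 4%:R^-1 * Nm Z ^+ P.
  move=> trZ.
  have c := chain n Z K.
  have hy := hK _ hK2 Z trZ.
  have [zz|zp] := eqVneq (Nm Z) 0.
    have Z0 : Z = 0 := hsf_eq0 zz.
    rewrite Z0 in zz *; rewrite fix_iter ?(lin0 linT) // zz expr0n eqn0Ngt Ppos /=.
    by rewrite mulr0.
  have zpos : 0 < Nm Z by rewrite lt_def zp hsf_ge0.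
  rewrite -(ler_pM2r zpos).
  apply: le_trans c _.
  apply: le_trans (ler_wpM2l (exprn_ge0 _ (hsf_ge0 Z)) hy) _.
  by rewrite mulrCA mulrA.
have geo j Z : \tr Z = 0 -> Nm (iter (n * j) T Z) ^+ P <= (4%:R^-1) ^+ j * Nm Z ^+ P.
  elim: j Z => [|j IH] Z trZ; first by rewrite muln0 expr0 mul1r.
  rewrite mulnS iterD exprS -mulrA.
  apply: le_trans (key _ _) _; first by rewrite (tp_iter tpT).
  apply: ler_wpM2l; first by rewrite invr_ge0 ler0n.
  exact: IH.
apply: FIN dp (fun k => lin_iter k linT) (fun k => fix_iter Tsig k) _ => Z trZ.
apply: (@DEC _ _ (fun m => iter m T) Z P) => // j.
apply: (@geo_ev (fun m => iter m T) Z P _ (fun j => n * j)%N _ j) => [a b|j'].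
  by rewrite iterD; apply: powle; [exact: hsf_ge0 | exact: contr_iter ds _ _].
exact: geo.
Qed.

End Dir.

Theorem mainTheorem11 (R : realType) (d : nat)
    (T : {linear 'M[R[i]]_d -> 'M[R[i]]_d}) :
  doubly_stochastic T ->
  (primitive T <->
   exists n : nat,
     primitive (fun X => iter n (hs_adjoint T) (iter n T X))).
Proof.
move=> ds; split; [exact: dir1 | exact: dir2].
Qed.
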